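(* Let $k\geq 2$ be an integer, and for $n\ge 1$ let $P_{n,k}=B_k(n)/k^n$ be the probability that a uniformly random length-$n$ word over $\Sigma_k$ has a unique border, where $B_k(n)$ is the number of length-$n$ words over $\Sigma_k$ with a unique border. Then the limit $P_k=\lim_{n\to\infty}P_{n,k}$ exists.
   Context: $\Sigma_k=\{0,1,\ldots,k-1\}$. A border of a word $w$ is a non-empty word that is both a proper prefix and a proper suffix of $w$. A word has a unique border if it has exactly one border. *)

(* Defs.v *)
From mathcomp Require Import all_boot.
From Stdlib Require Import Reals.

Set Implicit Arguments. Unset Strict Implicit. Unset Printing Implicit Defensive.

Definition is_border {T : eqType} (u w : seq T) : bool :=
  [&& 0 < size u, size u < size w, prefix u w & suffix u w].

(* The list of borders of w: every border is a prefix, hence of the form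
   take i w; these candidates are pairwise distinct (distinct lengths). *)
Definition borders {T : eqType} (w : seq T) : seq (seq T) :=
  [seq u <- [seq take i w | i <- iota 0 (size w).+1] | is_border u w].

Definition unique_border {T : eqType} (w : seq T) : bool :=
  size (borders w) == 1.

Definition B (k n : nat) : nat :=
  #|[set w : n.-tuple 'I_k | unique_border (tval w)]|.

Definition P (k n : nat) : R := (INR (B k n) / INR (expn k n))%R.

(* Main.v *)
Require Import Defs.
From mathcomp Require Import all_boot.
From Stdlib Require Import Reals.
From Stdlib Require Import Lra Lia.
From Coquelicot Require Import Coquelicot.
From mathcomp Require Import all_boot zify.

Set Implicit Arguments. Unset Strict Implicit. Unset Printing Implicit Defensive.
Close Scope R_scope. Open Scope nat_scope.
Lemma half_facts n : n./2 + n./2 <= n /\ n <= n./2 + n./2 + 1.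
Proof. have := odd_double_half n; rewrite -addnn; case: (odd n) => /= <-; lia. Qed.

Section Seqs.
Variable T : eqType.

Definition hasb (w : seq T) i :=
  [&& 0 < i, i < size w & take i w == drop (size w - i) w].

Lemma borders_count (w : seq T) :
  size (borders w) = count (hasb w) (iota 0 (size w).+1).
Proof.
rewrite /borders size_filter count_map; apply: eq_in_count => i.
rewrite mem_iota => /andP[_ Hi] /=.
rewrite /is_border /hasb size_take.
case: (ltnP i (size w)) => Hiw; last by rewrite ltnn !andbF; case: (0 < i); rewrite /= ?ltnNge ?Hiw.
by rewrite prefix_take suffixE size_take Hiw eq_sym /=; case: (0 < i).
Qed.

Lemma ub_count (w : seq T) M : size w < M ->
  unique_border w = (count (hasb w) (iota 0 M) == 1).
Proof.
move=> HM; rewrite /unique_border borders_count.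
rewrite -(subnKC HM) (iotaD 0 (size w).+1) count_cat.
rewrite (@eq_in_count _ _ pred0 (iota (0 + (size w).+1) _)) ?count_pred0 ?addn0 //.
move=> i; rewrite mem_iota /hasb => /andP[Hi _] /=.
case: (0 < i) => //=; rewrite add0n in Hi; by rewrite ltnNge (ltnW Hi).
Qed.

Definition goodb (w : seq T) :=
  ~~ has (hasb w) (iota (size w)./2 (size w - (size w)./2)).

Lemma goodP (w : seq T) i : goodb w -> hasb w i -> i < (size w)./2.
Proof.
move=> /hasPn G H; rewrite ltnNge; apply/negP => Hi.
have: i \in iota (size w)./2 (size w - (size w)./2).
  move: H; rewrite mem_iota /hasb => /and3P[_ H _].
  have := half_facts (size w); rewrite Hi /=; lia.
by move/G; rewrite H.
Qed.

Definition insw (s : seq T) x := take (size s)./2 s ++ x :: drop (size s)./2 s.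

Lemma size_insw s x : size (insw s x) = (size s).+1.
Proof.
rewrite /insw size_cat /= size_take size_drop.
have := half_facts (size s); case: ifP => H; move: H; lia.
Qed.

Lemma hasb_ins s x i : i <= (size s)./2 -> hasb (insw s x) i = hasb s i.
Proof.
move=> Hi; set n := size s; set c := n./2.
have [H1 H2] := half_facts n.
case: (posnP i) => [->|i0]; first by rewrite /hasb.
have Hc : size (take c s) = c by rewrite size_take; case: ifP => //; rewrite -/n; lia.
rewrite /hasb size_insw -/n /insw -/c i0 /=.
rewrite takel_cat ?Hc // take_takel //.
rewrite drop_cat Hc.
have -> : (n.+1 - i < c) = false by lia.
have -> : n.+1 - i - c = (n - i - c).+1 by lia.
rewrite /= drop_drop.
have -> : n - i - c + c = n - i by lia.
have -> : i < n.+1 by lia.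
have -> : i < n by lia.
done.
Qed.

Lemma ub_ins s x : goodb (insw s x) -> goodb s ->
  unique_border (insw s x) = unique_border s.
Proof.
move=> G1 G2; set n := size s.
have [H1 H2] := half_facts n.
rewrite (@ub_count (insw s x) n.+2) ?size_insw // (@ub_count s n.+2) //.
congr (_ == 1); apply: eq_count => i.
case: (leqP i n./2) => Hi; first exact: hasb_ins.
case E1: (hasb (insw s x) i).
  have := goodP G1 E1; rewrite size_insw -/n.
  have [H3 H4] := half_facts n.+1; lia.
case E2: (hasb s i) => //.
have := goodP G2 E2; rewrite -/n; lia.
Qed.

Lemma per_eq (x0 : T) (w w' : seq T) m : size w = size w' ->
  hasb w m -> hasb w' m -> take (size w - m) w = take (size w - m) w' -> w = w'.
Proof.
move=> Hs /and3P[m0 mN /eqP Hw] /and3P[_ _ /eqP Hw'] Ht.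
apply: (eq_from_nth (x0:=x0) Hs) => i.
elim/ltn_ind: i => i IH Hi.
set p := size w - m.
case: (ltnP i p) => Hip.
  by rewrite -(nth_take x0 Hip w) -(nth_take x0 Hip w') Ht.
have e : forall v, size v = size w -> take m v = drop (size v - m) v ->
   nth x0 v i = nth x0 v (i - p).
  move=> v Hv Hv'.
  have -> : i = (size v - m) + (i - p) by rewrite /p; lia.
  rewrite -nth_drop -Hv' nth_take; last by rewrite /p; lia.
  congr nth; rewrite /p; lia.
rewrite (e w) // (e w') // IH //; rewrite /p; lia.
Qed.

End Seqs.
Lemma cardU_le (T : finType) (A B : {set T}) : #|A :|: B| <= #|A| + #|B|.
Proof. by rewrite cardsU leq_subr. Qed.

Lemma card_preim_bij (A B : finType) (f : A -> B) (P : pred B) :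
  bijective f -> #|[set a | P (f a)]| = #|[set b | P b]|.
Proof.
case=> g fK gK; rewrite -(card_imset _ (can_inj fK)); apply: eq_card => b; rewrite !inE.
apply/imsetP/idP.
  by case=> a; rewrite inE => Ha ->.
by move=> Hb; exists (g b); rewrite ?inE gK.
Qed.

Lemma card_fst (A B : finType) (P : pred A) :
  #|[set p : A * B | P p.1]| = #|[set a | P a]| * #|B|.
Proof.
have -> : [set p : A * B | P p.1] = setX [set a | P a] [set: B].
  by apply/setP => -[a b]; rewrite !inE andbT.
by rewrite cardsX cardsT.
Qed.

Lemma geo k d a : 1 < k ->
  \sum_(m <- iota a d) k ^ (a + d - m) <= 2 * k ^ d.
Proof.
move=> k2; elim: d a => [|d IH] a; first by rewrite big_nil.
rewrite /= big_cons.
have E : a + d.+1 - a = d.+1 by lia.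
rewrite E.
have := IH a.+1; rewrite addSnnS => H.
apply: (leq_trans (leq_add (leqnn _) H)).
rewrite expnS; nia.
Qed.

Section Count.
Variable k : nat.
Hypothesis k2 : 1 < k.
Let T := 'I_k.
Let x0 : T := Ordinal (ltnW k2).

Definition bad N := #|[set t : N.-tuple T | ~~ goodb (tval t)]|.

Lemma card_Bm N m : #|[set t : N.-tuple T | hasb t m]| <= k ^ (N - m).
Proof.
case: (ltnP m N) => HmN; last first.
  rewrite (_ : [set t : N.-tuple T | hasb t m] = set0) ?cards0 //.
  apply/setP => t; rewrite !inE /hasb size_tuple.
  by case: (0 < m); rewrite //= ltnNge HmN.
set p := N - m.
pose f := fun t : N.-tuple T => [tuple of take p t].
have inj : {in [set t : N.-tuple T | hasb t m] &, injective f}.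
  move=> t t'; rewrite !inE => Ht Ht' /(congr1 val) /= E.
  apply: val_inj; apply: (per_eq x0 _ Ht Ht'); rewrite ?size_tuple //.
rewrite -(card_in_imset inj).
apply: leq_trans (subset_leq_card (subsetT _)) _.
rewrite cardsT card_tuple card_ord.
by rewrite (minn_idPl _) // /p leq_subr.
Qed.

Lemma card_has N r :
  #|[set t : N.-tuple T | has (hasb t) r]| <= \sum_(m <- r) k ^ (N - m).
Proof.
elim: r => [|m r IH].
  rewrite big_nil (_ : [set t : N.-tuple T | has (hasb t) [::]] = set0) ?cards0 //.
rewrite big_cons.
rewrite (_ : [set t : N.-tuple T | has (hasb t) (m :: r)] =
   [set t : N.-tuple T | hasb t m] :|: [set t : N.-tuple T | has (hasb t) r]).
  exact: leq_trans (cardU_le _ _) (leq_add (card_Bm _ _) IH).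
by apply/setP => t; rewrite !inE.
Qed.

Lemma bad_bound N : bad N <= 2 * k ^ (N - N./2).
Proof.
have [H1 H2] := half_facts N.
rewrite /bad (_ : [set t : N.-tuple T | ~~ goodb t] =
   [set t : N.-tuple T | has (hasb t) (iota N./2 (N - N./2))]); last first.
  by apply/setP => t; rewrite !inE /goodb size_tuple negbK.
apply: leq_trans (card_has _ _) _.
have := geo (N - N./2) N./2 k2; rewrite subnKC //; lia.
Qed.

Lemma insw_tupleP n (t : n.-tuple T) x : size (insw t x) == n.+1.
Proof. by rewrite size_insw size_tuple. Qed.

Definition ins n (p : n.-tuple T * T) : n.+1.-tuple T := Tuple (insw_tupleP p.1 p.2).

Lemma ins_inj n : injective (@ins n).
Proof.
move=> [t x] [t' x'] /(congr1 val) /=; rewrite /insw !size_tuple => E.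
move/eqP: E; rewrite eqseq_cat; last first.
  by rewrite !size_take !size_tuple.
case/andP => /eqP E1 /eqP [E2 E3].
congr (_, _) => //; apply: val_inj => /=.
by rewrite -(cat_take_drop n./2 t) -(cat_take_drop n./2 t') E1 E3.
Qed.

Lemma ins_bij n : bijective (@ins n).
Proof.
apply: (inj_card_bij (@ins_inj n)).
by rewrite card_prod !card_tuple !card_ord expnSr.
Qed.

Lemma main_ineq n :
  B k n.+1 <= B k n * k + (bad n.+1 + bad n * k) /\
  B k n * k <= B k n.+1 + (bad n.+1 + bad n * k).
Proof.
have EX : #|[set p : n.-tuple T * T | unique_border (ins p)]| = B k n.+1.
  exact: (card_preim_bij (fun w : n.+1.-tuple T => unique_border w) (ins_bij n)).
have EY : #|[set p : n.-tuple T * T | unique_border p.1]| = B k n * k.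
  by rewrite (@card_fst _ T (fun t : n.-tuple T => unique_border t)) card_ord.
have EZ1 : #|[set p : n.-tuple T * T | ~~ goodb (ins p)]| = bad n.+1.
  exact: (card_preim_bij (fun w : n.+1.-tuple T => ~~ goodb w) (ins_bij n)).
have EZ2 : #|[set p : n.-tuple T * T | ~~ goodb p.1]| = bad n * k.
  by rewrite (@card_fst _ T (fun t : n.-tuple T => ~~ goodb t)) card_ord.
set X := [set p : n.-tuple T * T | unique_border (ins p)] in EX.
set Y := [set p : n.-tuple T * T | unique_border p.1] in EY.
set Z1 := [set p : n.-tuple T * T | ~~ goodb (ins p)] in EZ1.
set Z2 := [set p : n.-tuple T * T | ~~ goodb p.1] in EZ2.
have key : forall p, p \notin Z1 -> p \notin Z2 -> (p \in X) = (p \in Y).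
  move=> [t x]; rewrite !inE !negbK => G1 G2 /=.
  by rewrite /ins /= ub_ins.
have sub : forall A B : {set n.-tuple T * T}, (forall p, p \in A -> p \notin Z1 -> p \notin Z2 -> p \in B) ->
   #|A| <= #|B| + (#|Z1| + #|Z2|).
  move=> A B H.
  apply: (@leq_trans #|B :|: (Z1 :|: Z2)|); last first.
    exact: leq_trans (cardU_le _ _) (leq_add (leqnn _) (cardU_le _ _)).
  apply: subset_leq_card; apply/subsetP => p Hp.
  rewrite !in_setU; case E1: (p \in Z1); case E2: (p \in Z2); rewrite ?orbT //=.
  by rewrite orbF; apply: H => //; rewrite ?E1 ?E2.
rewrite -EX -EY -EZ1 -EZ2; split; apply: sub => p Hp N1 N2.
  by rewrite -key.
by rewrite key.
Qed.

End Count.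
Lemma nat_bound k n (k2 : 1 < k) :
  bad k n.+1 + bad k n * k <= 4 * k ^ (n.+1 - n./2).
Proof.
have [H1 H2] := half_facts n.
have [H3 H4] := half_facts n.+1.
have A : bad k n.+1 <= 2 * k ^ (n.+1 - n./2).
  apply: leq_trans (bad_bound k2 n.+1) _.
  rewrite leq_mul2l; apply/orP; right; apply: leq_pexp2l; lia.
have Bb : bad k n * k <= 2 * k ^ (n.+1 - n./2).
  rewrite subSn; last lia.
  rewrite expnSr mulnA leq_mul2r; apply/orP; right; exact: bad_bound.
lia.
Qed.

Open Scope R_scope.

Lemma INR_expn a b : INR (expn a b) = INR a ^ b.
Proof. elim: b => [|b IH] //=; rewrite expnS mult_INR IH; ring. Qed.

Lemma pow_aux n : 1 <= 2 * (3/4)^n * 2^(n./2).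
Proof.
set j := n./2.
have En : n = (j + j + odd n)%nat.
  have := odd_double_half n; rewrite -addnn -/j => E; lia.
rewrite {1}En !pow_add.
have -> : 2 * ((3/4)^j * (3/4)^j * (3/4)^(odd n)) * 2^j
   = 2 * (3/4)^(odd n) * ((3/4)*(3/4)*2)^j.
  rewrite !Rpow_mult_distr; ring.
have h1 : 1 <= ((3/4)*(3/4)*2)^j by apply: pow_R1_Rle; lra.
have h2 : 3/4 <= (3/4)^(odd n) by case: (odd n) => /=; lra.
nra.
Qed.

Lemma diff_bound k n (k2 : (1 < k)%N) : Rabs (P k n.+1 - P k n) <= 8 * (3/4)^n.
Proof.
have [I1 I2] := main_ineq k n.
have Eb := nat_bound n k2.
set B1 := B k n.+1 in I1 I2 *.
set B0 := B k n in I1 I2 *.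
set E := (bad k n.+1 + bad k n * k)%N in I1 I2 Eb.
have [H1 H2] := half_facts n.
have ek : (k ^ n.+1 = k ^ (n.+1 - n./2) * k ^ (n./2))%N.
  by rewrite -expnD subnK //; lia.
set F := INR (k ^ (n.+1 - n./2)).
set H := INR (k ^ (n./2)).
have kpos : 2 <= INR k by apply: (le_INR 2); apply/leP.
have Hge : 2 ^ (n./2) <= H by rewrite /H INR_expn; apply: pow_incr; lra.
have H2pos : 0 < 2 ^ (n./2) by apply: pow_lt; lra.
have Fpos : 0 < F by rewrite /F INR_expn; apply: pow_lt; lra.
have J1 : INR B1 <= INR (B0 * k) + INR E by rewrite -plus_INR; apply: le_INR; apply/leP.
have J2 : INR (B0 * k) <= INR B1 + INR E by rewrite -plus_INR; apply: le_INR; apply/leP.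
have J3 : INR E <= 4 * F.
  have -> : 4 = INR 4 by rewrite /=; ring.
  by rewrite /F -mult_INR; apply: le_INR; apply/leP.
have eFH : F * H = INR k ^ n.+1.
  rewrite /F /H !INR_expn -pow_add; congr (_ ^ _); lia.
have eP1 : P k n.+1 = INR B1 / (F * H) by rewrite eFH /P INR_expn.
have eP0 : P k n = INR (B0 * k) / (F * H).
  rewrite eFH /P INR_expn mult_INR -/B0 -tech_pow_Rmult; field.
  repeat split; try lra; apply: pow_nonzero; lra.
rewrite eP1 eP0.
have FH : 0 < F * H by apply: Rmult_lt_0_compat; lra.
have -> : INR B1 / (F * H) - INR (B0 * k) / (F * H) = (INR B1 - INR (B0 * k)) / (F * H).
  by field; lra.
rewrite Rabs_div; last lra.
rewrite (Rabs_pos_eq (F * H)); last lra.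
have Ab : Rabs (INR B1 - INR (B0 * k)) <= 4 * F by apply: Rabs_le; lra.
apply: Rle_trans (_ : 4 * F / (F * H) <= _).
  apply: Rmult_le_compat_r; [apply: Rlt_le; apply: Rinv_0_lt_compat; lra| exact: Ab].
have -> : 4 * F / (F * H) = 4 / H by field; lra.
have := pow_aux n.
have : 4 / H <= 4 / 2 ^ (n./2).
  apply: Rmult_le_compat_l; first lra.
  apply: Rinv_le_contravar; lra.
move=> h1 h2.
apply: Rle_trans h1 _.
apply: (Rmult_le_reg_r (2 ^ (n./2))) => //.
have -> : 4 / 2 ^ (n./2) * 2 ^ (n./2) = 4 by field; lra.
nra.
Qed.

Theorem theorem12 (k : nat) : (2 <= k)%N ->
  exists Pk : R, Un_cv (fun n => P k n) Pk.
Proof.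
move=> k2.
set a := fun n => P k n.+1 - P k n.
have ex : ex_series a.
  apply: (@ex_series_le _ _ a (fun n => 8 * (3/4)^n)).
    move=> n; exact: diff_bound.
  apply: (ex_series_scal_l 8 (fun n => (3/4)^n)).
  apply: ex_series_geom; rewrite Rabs_pos_eq; lra.
case: ex => l Hl.
have Hs : is_lim_seq (sum_n a) l := Hl.
have es : forall n, sum_n a n = P k n.+1 - P k 0.
  elim=> [|n IH]; first by rewrite sum_O.
  rewrite sum_Sn IH /plus /= /a; ring.
exists (l + P k 0).
apply/is_lim_seq_Reals.
apply/is_lim_seq_incr_1.
apply: (is_lim_seq_ext (fun n => sum_n a n + P k 0)).
  move=> n; rewrite es; ring.
apply: is_lim_seq_plus'; first exact: Hs.
exact: is_lim_seq_const.
Qed.
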